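(* Let $G$ be a map graph with a corresponding planar bipartite graph $B$, let $\mathcal{D}=(T,\beta_{\mathcal{D}})$ be a nice tree decomposition of $B$, and let $\mathcal{D}'=(T,\beta_{\mathcal{D}'})$ be derived from $\mathcal{D}$ as described in the context. Let $v\in V(G)$ and $s\in S(G)$ with $v\in N_B(s)$, and suppose $Q=\{t\in V(T): v\in\mathsf{Fake}(t)\text{ and } s\in\beta_{\mathcal{D}}(t)\}\neq\emptyset$. Let $x$ be the node of $T$ labelled forget$(v)$ in $\mathcal{D}$, and let $y$ be the unique child of the node labelled forget$(s)$ in $\mathcal{D}$. Then $y$ is an ancestor of $x$, and $Q$ induces in $T$ exactly the unique path between $x$ and $y$.
   Context: All graphs are finite and simple. For a bipartite graph $B$ with bipartition $V(B)=W\uplus U$, the half-square of $B$ is the graph on $W$ in which two vertices are adjacent iff they are at distance exactly $2$ in $B$. A graph $G$ is a map graph iff it is the half-square of some planar bipartite graph $B$; such $B$ (with $W=V(G)$) is a corresponding planar bipartite graph, and $S(G)=U$ is the set of special vertices. A tree decomposition $(T,\beta)$ of a graph: rooted tree $T$, bags $\beta(t)$, every vertex and every edge covered by some bag, and for each vertex the nodes containing it induce a connected subtree. For a node $t$, $\gamma_{\mathcal{D}}(t)$ is the union of the bags of $t$ and all its descendants. A tree decomposition is nice if the root has empty bag and each node is either a leaf with empty bag, an introduce$(w)$ node (one child $u$, $\beta(t)=\beta(u)\cup\{w\}$, $w\notin\beta(u)$), a forget$(w)$ node (one child $u$, $\beta(t)=\beta(u)\setminus\{w\}$, $w\in\beta(u)$),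 or a join node (two children with bags equal to $\beta(t)$); in a nice tree decomposition, for every vertex $w$ there is exactly one node labelled forget$(w)$. The decomposition $\mathcal{D}'$ derived from $\mathcal{D}$ has the same tree $T$ and bags $\beta_{\mathcal{D}'}(t)=(\beta_{\mathcal{D}}(t)\cap V(G))\cup\bigcup_{s\in\beta_{\mathcal{D}}(t)\cap S(G)}(N_B(s)\cap\gamma_{\mathcal{D}}(t))$. For a node $t$, $\mathsf{Fake}(t)=\beta_{\mathcal{D}'}(t)\setminus\beta_{\mathcal{D}}(t)$. *)

(* Defs.v *)
From mathcomp Require Import all_boot.
Set Implicit Arguments. Unset Strict Implicit. Unset Printing Implicit Defensive.

Section Graphs.
Variable V : finType.
Variable e : rel V.

Definition simple_graph : Prop := irreflexive e /\ symmetric e.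

Definition nbhd (a : V) : {set V} := [set b | e a b].

(* A graph is planar iff some rotation system satisfies Euler's formula
   V - E + F = 2 * #components, where isolated vertices are counted as
   contributing one extra face-equivalent (a component with no edge has no
   darts), i.e. V - E + F + #isolated = 2 * #components
   (written without subtraction, using #darts = 2E). *)
Definition darts : {set V * V} := [set d | e d.1 d.2].

Definition rotation_system (rho : V * V -> V * V) : Prop :=
  (forall d, d \in darts -> rho d \in darts /\ (rho d).1 = d.1) /\
  (forall d d', d \in darts -> d' \in darts -> d.1 = d'.1 -> fconnect rho d d').

Definition face_perm (rho : V * V -> V * V) (d : V * V) : V * V := rho (d.2, d.1).

Definition faces (rho : V * V -> V * V) : {set {set V * V}} :=
  [set [set d' in darts | fconnect (face_perm rho) d d'] | d in darts].

Definition components : {set {set V}} := [set [set b | connect e a b] | a : V].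

Definition isolated : {set V} := [set a | ~~ [exists b, e a b]].

Definition planar : Prop :=
  exists rho : V * V -> V * V, rotation_system rho /\
    2 * (#|V| + #|faces rho| + #|isolated|) = 4 * #|components| + #|darts|.

Definition bipartite_sides (W : {set V}) : Prop :=
  forall a b, e a b -> (a \in W) != (b \in W).

Definition half_square (W : {set V}) (eG : rel V) : Prop :=
  forall a b, eG a b =
    [&& a \in W, b \in W, a != b, ~~ e a b & [exists u, e a u && e u b]].

(* G = (W, eG) is a map graph with corresponding planar bipartite graph
   B = (V, e), bipartition V = W (+) ~: W; S(G) = ~: W *)
Definition map_graph_with (W : {set V}) (eG : rel V) : Prop :=
  [/\ simple_graph, bipartite_sides W, planar & half_square W eG].

End Graphs.

Section Trees.
Variable N : finType.
Variable root : N.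
Variable par : N -> N.      (* parent function; par root = root *)

Definition rooted_tree : Prop :=
  par root = root /\ forall t, fconnect par t root.

Definition children (t : N) : {set N} := [set c | (c != root) && (par c == t)].

Definition tadj : rel N :=
  fun a b => ((a != root) && (par a == b)) || ((b != root) && (par b == a)).

Definition anc (a d : N) : bool := fconnect par d a.

Variable V : finType.
Variable bag : N -> {set V}.

Definition gamma (t : N) : {set V} := \bigcup_(d | anc t d) bag d.

Definition tree_decomposition (e : rel V) : Prop :=
  [/\ rooted_tree,
      (forall a, exists t, a \in bag t),
      (forall a b, e a b -> exists t, (a \in bag t) && (b \in bag t)) &
      (forall a t1 t2, a \in bag t1 -> a \in bag t2 ->
         connect [rel u w | [&& tadj u w, a \in bag u & a \in bag w]] t1 t2)].

Definition is_leaf (t : N) : Prop := children t = set0 /\ bag t = set0.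
Definition is_introduce (t : N) (w : V) : Prop :=
  exists u, [/\ children t = [set u], w \notin bag u & bag t = w |: bag u].
Definition is_forget (t : N) (w : V) : Prop :=
  exists u, [/\ children t = [set u], w \in bag u & bag t = bag u :\ w].
Definition is_join (t : N) : Prop :=
  exists u1 u2, [/\ u1 != u2, children t = [set u1; u2],
                   bag u1 = bag t & bag u2 = bag t].

Definition nice_tree_decomposition (e : rel V) : Prop :=
  [/\ tree_decomposition e, bag root = set0 &
      forall t, is_leaf t \/ (exists w, is_introduce t w)
                \/ (exists w, is_forget t w) \/ is_join t].

Definition derived_bag (e : rel V) (W : {set V}) (t : N) : {set V} :=
  (bag t :&: W) :|: \bigcup_(s in bag t :&: ~: W) (nbhd e s :&: gamma t).

Definition Fake (e : rel V) (W : {set V}) (t : N) : {set V} :=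
  derived_bag e W t :\: bag t.

End Trees.

(* Main.v *)
Require Import Defs.
From mathcomp Require Import all_boot.
Set Implicit Arguments. Unset Strict Implicit. Unset Printing Implicit Defensive.

Lemma fcE (T : finType) (f : T -> T) a b : fconnect f a b -> exists n, iter n f a = b.
Proof. move=> h; exists (findex f a b); exact: iter_findex. Qed.

Lemma fcS (T : finType) (f : T -> T) a b : fconnect f a b -> a = b \/ fconnect f (f a) b.
Proof.
move=> /fcE [[|n] <-]; first by left.
by right; rewrite iterSr; apply: fconnect_iter.
Qed.

Lemma fc_cmp (T : finType) (f : T -> T) d t t' :
  fconnect f d t -> fconnect f d t' -> fconnect f t t' \/ fconnect f t' t.
Proof.
move=> /fcE [i <-] /fcE [j <-].
case: (leqP i j) => hij.
  left; rewrite -(subnK hij) iterD; exact: fconnect_iter.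
right; rewrite -(subnK (ltnW hij)) iterD; exact: fconnect_iter.
Qed.

Lemma iter_fix (T : Type) (f : T -> T) u k : f u = u -> iter k f u = u.
Proof. by move=> h; elim: k => //= k ->. Qed.

Lemma fix_root (NT : finType) (r : NT) par u :
  rooted_tree r par -> par u = u -> u = r.
Proof.
move=> [_ hr] hu; have /fcE [k <-] := hr u; by rewrite iter_fix.
Qed.

Lemma anc_antisym (NT : finType) (r : NT) par a b :
  rooted_tree r par -> fconnect par a b -> fconnect par b a -> a = b.
Proof.
move=> [hr0 hr] /fcE [m hm] /fcE [n hn].
case E: (n + m) => [|l].
  by move: E hm => /eqP; rewrite addn_eq0 => /andP [_ /eqP ->] /= .
have hper : forall c, iter (c * (n + m)) par a = a.
  elim=> [|c IH] //=; by rewrite mulSn iterD IH iterD hm hn.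
have /fcE [k hk] := hr a.
have ha : a = r.
  rewrite -(hper k) mulnC E mulSn addnC iterD hk iter_fix //.
by move: hm; rewrite ha iter_fix // => <-.
Qed.

Lemma edge_out (NT : finType) (r : NT) par m u w :
  tadj r par u w -> fconnect par u m -> ~~ fconnect par w m ->
  [/\ u = m, u != r & w = par u].
Proof.
rewrite /tadj => /orP [/andP [hu /eqP hw] | /andP [hw /eqP hu]] hum hwm.
  case: (fcS hum) => [<- | h]; first by [].
  by move: hwm; rewrite -hw h.
by move: hwm; rewrite (connect_trans (fconnect1 par w)) // hu.
Qed.

Lemma leave (NT : finType) (r : NT) par (V : finType) (bag : NT -> {set V}) a m d t :
  connect [rel u w | [&& tadj r par u w, a \in bag u & a \in bag w]] d t ->
  fconnect par d m -> ~~ fconnect par t m ->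
  [/\ m != r, a \in bag m & a \in bag (par m)].
Proof.
move=> /connectP [p hp ->] {t}.
elim: p d hp => [|z p IH] d /=; first by move=> _ ->.
move=> /andP [/and3P [hdz had haz] hp] hdm hl.
case hzm: (fconnect par z m); first exact: IH hp hzm hl.
have [hdm' hdr hz] := edge_out hdz hdm (negbT hzm).
by rewrite -hdm' hdr had -hz haz.
Qed.

Lemma between (NT : finType) (r : NT) par (V : finType) (bag : NT -> {set V}) (e : rel V) a m d top :
  tree_decomposition r par bag e ->
  a \in bag d -> a \in bag top -> fconnect par d m -> fconnect par m top -> a \in bag m.
Proof.
move=> [hrt _ _ hc] had hat hdm hmt.
case: (eqVneq top m) => [<- // | hne].
have hn : ~~ fconnect par top m.
  by apply/negP => h; move: hne; rewrite (anc_antisym hrt h hmt) eqxx.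
by have [] := leave (hc a d top had hat) hdm hn.
Qed.

Lemma chain (NT : finType) (r : NT) par x y :
  rooted_tree r par -> fconnect par x y ->
  exists p : seq NT, [/\ path (tadj r par) x p, last x p = y, uniq (x :: p) &
     forall t, (t \in x :: p) = (fconnect par x t && fconnect par t y)].
Proof.
move=> hrt /fcE [n hn]; elim: n x hn => [|n IH] x hn.
  exists [::]; split=> //= t; rewrite inE.
  apply/eqP/andP => [-> | [h1 h2]]; first by rewrite -hn /= connect0.
  by rewrite /= in hn; subst y; apply: anc_antisym hrt h2 h1.
case: (eqVneq x y) => [<- | hxy].
  exists [::]; split=> //= t; rewrite inE.
  apply/eqP/andP => [-> | [h1 h2]]; first by rewrite connect0.
  exact: anc_antisym hrt h2 h1.
rewrite iterSr in hn; have [p [hp hl hu hm]] := IH _ hn.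
have hxr : x != r.
  apply/eqP => hx; move: hn hxy; rewrite hx (proj1 hrt) iter_fix ?(proj1 hrt) // => ->.
  by rewrite eqxx.
have hpx : par x != x by apply: contra hxr => /eqP /(fix_root hrt) ->.
exists (par x :: p); split.
- by rewrite /= hp andbT /tadj hxr eqxx.
- by [].
- rewrite /= in hu *; rewrite hu andbT inE negb_or eq_sym hpx /=.
  apply/negP => hxp; have : x \in par x :: p by rewrite inE hxp orbT.
  rewrite hm => /andP [h _]; move: hpx.
  by rewrite (anc_antisym hrt h (fconnect1 par x)) eqxx.
- move=> t; rewrite inE hm; apply/orP/andP.
    case=> [/eqP -> | /andP [h1 h2]]; first by rewrite connect0 -hn -iterSr fconnect_iter.
    by rewrite (connect_trans (fconnect1 par x) h1).
  case=> h1 h2; case: (fcS h1) => [-> | h]; first by left.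
  by right; rewrite h h2.
Qed.

Theorem lemma11 (VB : finType) (eB eG : rel VB) (W : {set VB})
  (NT : finType) (r : NT) (par : NT -> NT) (bag : NT -> {set VB})
  (v s : VB) (x fs y : NT) :
  map_graph_with eB W eG ->
  nice_tree_decomposition r par bag eB ->
  v \in W -> s \in ~: W -> v \in nbhd eB s ->
  [set t | (v \in Fake par bag eB W t) && (s \in bag t)] != set0 ->
  is_forget r par bag x v ->
  is_forget r par bag fs s ->
  y \in children r par fs ->
  anc par y x /\
  exists p : seq NT,
    [/\ path (tadj r par) x p, last x p = y, uniq (x :: p) &
        [set t | (v \in Fake par bag eB W t) && (s \in bag t)]
          = [set t in x :: p]].
Proof.
move=> _ [htd hbr _] hvW hsW hvs hQ [uv [hcx hvuv hbx]] [us [hcf hsus hbf]] hy.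
have htd' := htd; case: htd' => hrt hcov hedge hconn.
have : uv \in children r par x by rewrite hcx set11.
rewrite inE => /andP [huvr /eqP hpuv].
move: hy; rewrite hcf inE => /eqP hyus; subst us.
have : y \in children r par fs by rewrite hcf set11.
rewrite inE => /andP [hyr /eqP hpy].
have Tv : forall t, v \in bag t -> fconnect par t uv.
  move=> t hvt; apply/negPn/negP => hn.
  have [_ _ hvp] := leave (hconn v uv t hvuv hvt) (connect0 _ _) hn.
  by move: hvp; rewrite hpuv hbx setD11.
have Ts : forall t, s \in bag t -> fconnect par t y.
  move=> t hst; apply/negPn/negP => hn.
  have [_ _ hsp] := leave (hconn s y t hsus hst) (connect0 _ _) hn.
  by move: hsp; rewrite hpy hbf setD11.
have hvs' := hvs; rewrite /nbhd inE in hvs'.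
have [te /andP [hste hvte]] := hedge s v hvs'.
have huvx : fconnect par uv x by rewrite -hpuv fconnect1.
have Qc : forall t, ((v \in Fake par bag eB W t) && (s \in bag t)) =
                    (fconnect par x t && fconnect par t y).
  move=> t; rewrite /Fake /derived_bag in_setD in_setU in_setI hvW andbT.
  apply/idP/idP.
    move=> /andP [/andP [hnv hder] hst].
    rewrite (negbTE hnv) /= in hder.
    move/bigcupP: hder => [s' _ /setIP [_ hg]].
    move/bigcupP: hg => [d hdt hvd].
    rewrite (Ts t hst) andbT.
    case: (fc_cmp hdt (Tv d hvd)) => h.
      by move: hnv; rewrite (between htd hvd hvuv hdt h).
    case: (fcS h) => [htuv | ]; last by rewrite -hpuv.
    by move: hnv; rewrite -htuv hvuv.
  move=> /andP [hxt hty].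
  have hnv : v \notin bag t.
    apply/negP => hvt.
    have hxuv : fconnect par x uv := connect_trans hxt (Tv t hvt).
    have e1 := anc_antisym hrt huvx hxuv.
    by move: huvr; rewrite (fix_root hrt (etrans hpuv (esym e1))) eqxx.
  have hst : s \in bag t.
    apply: (between htd hste hsus _ hty).
    exact: connect_trans (connect_trans (Tv te hvte) huvx) hxt.
  rewrite hnv hst /= andbT; apply/orP; right.
  apply/bigcupP; exists s; first by rewrite inE hst hsW.
  rewrite inE hvs; apply/bigcupP; exists te => //.
  exact: connect_trans (connect_trans (Tv te hvte) huvx) hxt.
have hxy : fconnect par x y.
  case/set0Pn: hQ => t; rewrite inE Qc => /andP [h1 h2].
  exact: connect_trans h1 h2.
split; first exact: hxy.
have [p [hp hl hu hm]] := chain hrt hxy.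
exists p; split=> //; apply/setP => t.
rewrite (in_set (fun t0 => (v \in Fake par bag eB W t0) && (s \in bag t0))) (in_set (fun t0 => t0 \in x :: p)). exact: (etrans (Qc t) (esym (hm t))).
Qed.
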